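(* Let $n \ge 2$ and let $T$ be a triangulation of the cyclic polytope $C = C(n+2,3)$, whose vertices are labelled $0,1,\dots,n+1$. Let $\{v,w\} \in F_1(T) \setminus F_1(C)$ be an internal edge with $v < w$. Then there are vertices $a, b, c$ of $C$ with $a < v < b < w < c$ such that $\{\{v,w,a\},\{v,w,b\},\{v,w,c\}\} \subseteq F_2(T)$.
   Context: The cyclic polytope $C(n+2,3)$ is the convex hull of $n+2$ points $\mu_3(t_0),\dots,\mu_3(t_{n+1})$ on the moment curve $\mu_3(t)=(t,t^2,t^3)$ with $t_0<t_1<\dots<t_{n+1}$; its vertices are labelled $0,1,\dots,n+1$ in this order, and faces are identified with their vertex sets. Its edges are $F_1(C)=\{\{0,n+1\},\{0,i\},\{i,n+1\},\{i,i+1\} : 0<i<n+1\}$ and its 2-faces are $F_2(C)=\{\{0,i,i+1\},\{i-1,i,n+1\} : 0<i<n+1\}$. A triangulation of $C$ is a set $T$ of 3-simplices (4-element subsets of $\{0,\dots,n+1\}$) such that the union of their convex hulls is $C$ and any two of them intersect in a common (possibly empty) face. For a triangulation $T$, $F_1(T)$ is the set of 2-element subsets contained in some simplex of $T$, and $F_2(T)$ is the set of 3-element subsets contained in some simplex of $T$. *)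

(* Defs.v *)
From HB Require Import structures.
From mathcomp Require Import all_boot all_order all_algebra.
From mathcomp Require Import reals.
Set Implicit Arguments. Unset Strict Implicit. Unset Printing Implicit Defensive.
Import Order.TTheory GRing.Theory Num.Theory.
Local Open Scope ring_scope.

Definition moment3 {R : realType} (x : R) : 'rV[R]_3 := \row_(i < 3) x ^+ i.+1.

(* Vertex labels 0..n+1 are 'I_(n+2); t i is the parameter of vertex i. *)
Definition strictly_increasing {R : realType} {m : nat} (t : 'I_m -> R) : Prop :=
  forall i j : 'I_m, (i < j)%N -> t i < t j.

Definition conv {R : realType} {m : nat} (t : 'I_m -> R) (S : {set 'I_m})
  (x : 'rV[R]_3) : Prop :=
  exists lam : 'I_m -> R,
    [/\ forall i, 0 <= lam i,
        forall i, i \notin S -> lam i = 0,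
        \sum_(i < m) lam i = 1
      & x = \sum_(i < m) lam i *: moment3 (t i)].

Definition cyclic_polytope {R : realType} {m : nat} (t : 'I_m -> R) :=
  conv t setT.

Definition triangulation {R : realType} {m : nat} (t : 'I_m -> R)
  (T : {set {set 'I_m}}) : Prop :=
  [/\ forall s, s \in T -> #|s| = 4%N,
      forall x, cyclic_polytope t x <-> exists2 s, s \in T & conv t s x
    & forall s1 s2, s1 \in T -> s2 \in T ->
        exists2 r : {set 'I_m}, r \subset s1 :&: s2 &
          forall x, (conv t s1 x /\ conv t s2 x) <-> conv t r x].

Definition F1T {m : nat} (T : {set {set 'I_m}}) (e : {set 'I_m}) : Prop :=
  #|e| = 2%N /\ exists2 s, s \in T & e \subset s.
Definition F2T {m : nat} (T : {set {set 'I_m}}) (f : {set 'I_m}) : Prop :=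
  #|f| = 3%N /\ exists2 s, s \in T & f \subset s.

Definition F1C (n : nat) (e : {set 'I_(n.+2)}) : Prop :=
  exists i j : 'I_(n.+2), e = [set i; j] /\
    [\/ (val i = 0 /\ val j = n.+1)%N,
        (val i = 0 /\ 0 < val j < n.+1)%N,
        (0 < val i < n.+1 /\ val j = n.+1)%N
      | (0 < val i < n.+1 /\ val j = (val i).+1)%N].

(* Main.v *)
Require Import Defs.
From mathcomp Require Import all_boot all_order all_algebra.
From mathcomp Require Import reals ring lra.
Set Implicit Arguments. Unset Strict Implicit. Unset Printing Implicit Defensive.
Import Order.TTheory GRing.Theory Num.Theory.
Local Open Scope ring_scope.

Section Geo.
Variable R : realType.

Definition aff (P : {poly R}) (X : 'rV[R]_3) : R :=
  P`_0 + \sum_(k < 3) P`_k.+1 * X ord0 k.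

Lemma aff_moment (P : {poly R}) x : (size P <= 4)%N -> aff P (moment3 x) = P.[x].
Proof.
move=> sP; rewrite (horner_coef_wide _ sP) big_ord_recl /aff expr0 mulr1.
congr (_ + _); apply: eq_bigr => k _; by rewrite mxE.
Qed.

Lemma aff_comb (I : finType) (P : {poly R}) (lam : I -> R) (Y : I -> 'rV[R]_3) :
  \sum_i lam i = 1 ->
  aff P (\sum_i lam i *: Y i) = \sum_i lam i * aff P (Y i).
Proof.
move=> s1; rewrite /aff.
under [RHS]eq_bigr do rewrite mulrDr.
rewrite big_split /= -mulr_suml s1 mul1r; congr (_ + _).
under eq_bigr do rewrite summxE mulr_sumr.
rewrite exchange_big /=; apply: eq_bigr => i _; rewrite mulr_sumr.
by apply: eq_bigr => k _; rewrite mxE mulrCA.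
Qed.


Lemma aff2 (P : {poly R}) a b X Y : a + b = 1 -> aff P (a *: X + b *: Y) = a * aff P X + b * aff P Y.
Proof.
move=> ab; have := @aff_comb bool P (fun i => if i then a else b) (fun i => if i then X else Y).
by rewrite !big_bool /=; apply.
Qed.

Lemma aff_lin (I : finType) (c : I -> R) (Q : I -> {poly R}) X :
  aff (\sum_i c i *: Q i) X = \sum_i c i * aff (Q i) X.
Proof.
rewrite /aff coef_sum.
under [RHS]eq_bigr do rewrite mulrDr.
rewrite big_split /=; congr (_ + _); first by apply: eq_bigr => i _; rewrite coefZ.
under eq_bigr do rewrite coef_sum mulr_suml.
rewrite exchange_big /=; apply: eq_bigr => i _; rewrite mulr_sumr.
by apply: eq_bigr => k _; rewrite coefZ mulrA.
Qed.


Section Lag.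
Variable m : nat.
Variable t : 'I_m -> R.
Hypothesis tinj : injective t.

Definition L (s : {set 'I_m}) j : {poly R} := \prod_(i in s | i != j) ('X - (t i)%:P).

Lemma L_size (s : {set 'I_m}) j : j \in s -> #|s| = 4%N -> size (L s j) = 4%N.
Proof.
move=> js s4; rewrite /L size_prod; last by move=> i _; rewrite polyXsubC_eq0.
under eq_bigr do rewrite size_XsubC.
rewrite sum_nat_const.
have -> : #|[pred i | (i \in s) && (i != j)]| = 3%N.
  have := cardsD1 j s; rewrite js s4 add1n => -[] ->.
  by apply: eq_card => i; rewrite !inE andbC.
by [].
Qed.

Lemma L_root (s : {set 'I_m}) j i : i \in s -> i != j -> (L s j).[t i] = 0.
Proof.
move=> iS ij; rewrite /L horner_prod (bigD1 i) /=; last by rewrite iS ij.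
by rewrite hornerXsubC subrr mul0r.
Qed.

Lemma L_nz (s : {set 'I_m}) j : (L s j).[t j] != 0.
Proof.
rewrite /L horner_prod; apply/prodf_neq0 => i /andP[_ ij].
by rewrite hornerXsubC subr_eq0 (inj_eq tinj) eq_sym.
Qed.

Definition bc (s : {set 'I_m}) X j := if j \in s then aff (L s j) X / (L s j).[t j] else 0.

Lemma bc_unique (s : {set 'I_m}) X (lam : 'I_m -> R) : #|s| = 4%N ->
  (forall i, i \notin s -> lam i = 0) -> \sum_i lam i = 1 ->
  X = \sum_i lam i *: moment3 (t i) -> forall j, lam j = bc s X j.
Proof.
move=> s4 l0 l1 -> j; rewrite /bc; case: ifP => js; last by rewrite l0 // js.
rewrite aff_comb // (bigD1 j) //= big1 ?addr0.
  by rewrite aff_moment ?L_size // mulfK // L_nz.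
move=> i ij; case iS: (i \in s); last by rewrite l0 ?iS // mul0r.
by rewrite aff_moment ?L_size // L_root // mulr0.
Qed.

Definition Qk (s : {set 'I_m}) k : {poly R} :=
  \sum_(j : 'I_m) (if j \in s then (t j)^+k / (L s j).[t j] else 0) *: L s j.

Lemma Qk_eq (s : {set 'I_m}) k : #|s| = 4%N -> (k < 4)%N -> Qk s k = 'X^k.
Proof.
move=> s4 k4; apply/eqP; rewrite -subr_eq0; apply/eqP.
apply: (@roots_geq_poly_eq0 _ _ [seq t i | i <- enum s]).
- apply/allP => x /mapP[i]; rewrite mem_enum => iS ->.
  rewrite /root hornerD hornerN hornerXn /Qk horner_sum (bigD1 i) //= big1.
    by rewrite iS hornerZ mulfVK ?L_nz // addr0 subrr.
  move=> j ji; case: ifP => js; last by rewrite scale0r horner0.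
  by rewrite hornerZ (L_root (j:=j) iS) ?mulr0 // eq_sym.
- by rewrite map_inj_uniq ?enum_uniq.
- rewrite size_map -cardE s4; apply: leq_trans (size_polyD _ _) _.
  rewrite geq_max size_polyN size_polyXn k4 andbT.
  apply: leq_trans (size_sum _ _ _) _; apply/bigmax_leqP => j _.
  case: ifP => js; last by rewrite scale0r size_poly0.
  by apply: leq_trans (size_scale_leq _ _) _; rewrite L_size.
Qed.

Lemma bc_key (s : {set 'I_m}) X k : #|s| = 4%N -> (k < 4)%N ->
  \sum_i bc s X i * t i ^+ k = aff 'X^k X.
Proof.
move=> s4 k4; rewrite -(Qk_eq s4 k4) /Qk aff_lin; apply: eq_bigr => j _.
rewrite /bc; case: ifP => _; last by rewrite !mul0r.
by rewrite mulrC mulrA mulrAC.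
Qed.

Lemma bc_span (s : {set 'I_m}) X : #|s| = 4%N ->
  \sum_i bc s X i = 1 /\ X = \sum_i bc s X i *: moment3 (t i).
Proof.
move=> s4; split.
  have := bc_key X s4 (isT : (0 < 4)%N); under eq_bigr do rewrite expr0 mulr1.
  move=> ->; rewrite /aff big1 ?addr0 ?coefXn //.
  by move=> k _; rewrite coefXn mul0r.
apply/rowP => k; rewrite summxE.
under eq_bigr do rewrite !mxE.
have k4 : (k.+1 < 4)%N by rewrite ltnS ltn_ord.
rewrite (bc_key X s4 k4) /aff coefXn add0r (bigD1 k) //= big1 ?addr0.
  by rewrite coefXn eqxx mul1r.
by move=> i ik; rewrite coefXn eqSS (_ : (i == k :> nat) = false) ?mul0r //; exact: negbTE ik.
Qed.

Lemma sum_d (a : R) (v : 'I_m) : \sum_(i : 'I_m) (if i == v then a else 0) = a.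
Proof. by rewrite (bigD1 v) //= eqxx big1 ?addr0 // => i /negbTE ->. Qed.

Lemma sum_dZ (a : R) (v : 'I_m) (Y : 'I_m -> 'rV[R]_3) :
  \sum_(i : 'I_m) (if i == v then a else 0) *: Y i = a *: Y v.
Proof. by rewrite (bigD1 v) //= eqxx big1 ?addr0 // => i /negbTE ->; rewrite scale0r. Qed.

Lemma bc_aff (s : {set 'I_m}) a b X Y j : a + b = 1 ->
  bc s (a *: X + b *: Y) j = a * bc s X j + b * bc s Y j.
Proof.
move=> ab; rewrite /bc; case: ifP => _; last by rewrite !mulr0 addr0.
by rewrite aff2 // mulrDl !mulrA.
Qed.

Lemma eps_exists (I : finType) (f : I -> R) : (forall x, 0 < f x) ->
  exists e, [/\ 0 < e, e <= 1 & forall x, e <= f x].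
Proof.
move=> fp; pose S := \sum_x (f x)^-1.
have S0 : 0 <= S by apply: sumr_ge0 => x _; rewrite invr_ge0 ltW.
exists (1 + S)^-1; split.
- by rewrite invr_gt0; lra.
- by rewrite invf_le1; lra.
move=> x; rewrite -[f x]invrK lef_pV2 ?posrE ?invr_gt0 ?fp //; last by lra.
rewrite /S (bigD1 x) //=; have : 0 <= \sum_(i | i != x) (f i)^-1.
  by apply: sumr_ge0 => i _; rewrite invr_ge0 ltW.
lra.
Qed.

Lemma main (T : {set {set 'I_m}}) (v w z : 'I_m) (s0 : {set 'I_m})
  (P : {poly R}) :
  triangulation t T -> s0 \in T -> v \in s0 -> w \in s0 -> v != w ->
  (size P <= 4)%N -> P.[t v] = 0 -> P.[t w] = 0 -> P.[t z] < 0 ->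
  exists s x, [/\ s \in T, v \in s, w \in s, x \in s & P.[t x] < 0].
Proof.
move=> [H4 Hcov Hint] s0T vs0 ws0 vw sP Pv Pw Pz.
pose mu i := moment3 (t i).
pose p := (1/2) *: mu v + (1/2) *: mu w.
pose rho i := (if i == v then 1/2 else 0) + (if i == w then (1/2 : R) else 0).
have rho_sum : \sum_i rho i = 1.
  by rewrite big_split /= !sum_d; lra.
have rho_eq : p = \sum_i rho i *: mu i.
  by under eq_bigr do rewrite scalerDl; rewrite big_split /= !sum_dZ.
have rho_v : rho v = 1/2.
  by rewrite /rho eqxx (negbTE vw) addr0.
have rho_w : rho w = 1/2.
  by rewrite /rho eqxx eq_sym (negbTE vw) add0r.
pose al (sj : {set 'I_m} * 'I_m) := bc sj.1 p sj.2.
pose ga (sj : {set 'I_m} * 'I_m) := bc sj.1 (mu z) sj.2.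
pose f sj := if al sj < 0 then - al sj / (`|ga sj - al sj| + 1) else 1.
have fpos : forall sj, 0 < f sj.
  move=> sj; rewrite /f; case: ifP => // a0.
  by apply: divr_gt0; [rewrite oppr_gt0 | apply: ltr_wpDl].
have [e [e0 e1 ef]] := eps_exists fpos.
pose q := (1 - e) *: p + e *: mu z.
have qC : cyclic_polytope t q.
  exists (fun i => (1 - e) * rho i + (if i == z then e else 0)); split.
  - move=> i; apply: addr_ge0; last by case: ifP => _; [apply: ltW|].
    apply: mulr_ge0; first lra.
    by rewrite /rho; apply: addr_ge0; case: ifP => _; lra.
  - by move=> i; rewrite in_setT.
  - by rewrite big_split /= -mulr_sumr rho_sum sum_d; lra.
  - under eq_bigr do rewrite scalerDl -scalerA.
    by rewrite big_split /= -scaler_sumr -rho_eq sum_dZ.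
have [s sT [lam [l0 lout l1 leq]]] := (proj1 (Hcov q) qC).
have s4 := H4 s sT.
have lbc := bc_unique s4 lout l1 leq.
have alpos : forall j, 0 <= al (s, j).
  move=> j; rewrite /al /=; case js: (j \in s); last by rewrite /bc js.
  rewrite leNgt; apply/negP => a0.
  have := l0 j; rewrite lbc bc_aff; last by lra.
  have := ef (s, j); rewrite /f /= -/(al (s, j)) -/(ga (s, j)) a0.
  rewrite /al /ga /=.
  set A := bc s p j; set G := bc s (mu z) j => efA.
  have hd := ler_norm (G - A).
  have hd1 : 0 < `|G - A| + 1 by apply: ltr_wpDl.
  move: efA; rewrite ler_pdivlMr // => efA.
  nra.
have ps : conv t s p.
  have [b1 b2] := bc_span p s4.
  exists (bc s p); split; [exact: alpos | by move=> i /negbTE ni; rewrite /bc ni | exact: b1 | exact: b2].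
have ps0 : conv t s0 p.
  exists rho; split; [ | | exact: rho_sum | exact: rho_eq].
  - by move=> i; rewrite /rho; apply: addr_ge0; case: ifP => _; lra.
  - move=> i ni; rewrite /rho; case: eqP => [iv|_]; first by rewrite iv vs0 in ni.
    by case: eqP => [iw|_]; [rewrite iw ws0 in ni | rewrite addr0].
have [r rsub Hr] := Hint s s0 sT s0T.
have [kap [k0 kout k1 keq]] := proj1 (Hr p) (conj ps ps0).
have s04 := H4 s0 s0T.
have kout0 : forall i, i \notin s0 -> kap i = 0.
  move=> i ni; apply: kout; apply: contra ni => ir.
  by have := subsetP rsub i ir; rewrite inE => /andP[].
have rout0 : forall i, i \notin s0 -> rho i = 0.
  move=> i ni; rewrite /rho; case: eqP => [iv|_]; first by rewrite iv vs0 in ni.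
  by case: eqP => [iw|_]; [rewrite iw ws0 in ni | rewrite addr0].
have kb := bc_unique s04 kout0 k1 keq.
have rb := bc_unique s04 rout0 rho_sum rho_eq.
have inr : forall j, rho j = 1/2 -> j \in s.
  move=> j rj; have : kap j = 1/2 by rewrite kb -rb.
  case jr: (j \in r); last by rewrite kout ?jr //; lra.
  by move=> _; have := subsetP rsub j jr; rewrite inE => /andP[].
have vs := inr v rho_v.
have ws := inr w rho_w.
have affq : aff P q = e * P.[t z].
  rewrite aff2; last by lra.
  rewrite /p aff2; last by lra.
  by rewrite !aff_moment // Pv Pw !mulr0 addr0 mulr0 add0r.
have : \sum_i lam i * P.[t i] < 0.
  have h := @aff_comb _ P lam mu l1.
  have : \sum_i lam i * aff P (mu i) = e * P.[t z] by rewrite -h -affq leq.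
  under eq_bigr do rewrite aff_moment //.
  move=> ->.
  by rewrite pmulr_rlt0.
move=> hs.
have [x hx] : exists x, lam x * P.[t x] < 0.
  apply/existsP; apply: contraLR hs => /existsPn hn.
  rewrite -leNgt; apply: sumr_ge0 => i _; by rewrite leNgt; apply: hn.
have xs : x \in s.
  case xs: (x \in s) => //; by rewrite lout ?xs // mul0r ltxx in hx.
exists s, x; split => //.
rewrite ltNge; apply/negP => hP.
by have := mulr_ge0 (l0 x) hP; rewrite leNgt hx.
Qed.

End Lag.
End Geo.
Section Fin.
Variable R : realType.

Lemma size3 (a b c : R) : (size (('X - a%:P) * ('X - b%:P) * ('X - c%:P))%R <= 4)%N.
Proof.
apply: leq_trans (size_mul_leq _ _) _; rewrite size_XsubC addn2 /=.
by apply: leq_trans (size_mul_leq _ _) _; rewrite !size_XsubC.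
Qed.

Lemma size2 (a b : R) : (size (('X - a%:P) * ('X - b%:P))%R <= 4)%N.
Proof. by apply: leq_trans (size_mul_leq _ _) _; rewrite !size_XsubC. Qed.

Lemma card3 m (v w x : 'I_m) : v != w -> v != x -> w != x -> #|[set v; w; x]| = 3%N.
Proof.
move=> vw vx wx; rewrite setUC cardsU1 cards2 !inE vw (eq_sym x) (negbTE vx).
by rewrite eq_sym (negbTE wx).
Qed.

Lemma F2T_of m (T : {set {set 'I_m}}) (s : {set 'I_m}) v w x :
  s \in T -> v \in s -> w \in s -> x \in s -> v != w -> v != x -> w != x ->
  F2T T [set v; w; x].
Proof.
move=> sT vs ws xs vw vx wx; split; first exact: card3.
exists s => //; apply/subsetP => y; rewrite !inE => /orP[/orP[]|] /eqP ->//.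
Qed.

End Fin.

Theorem lemma4 (R : realType) (n : nat) (t : 'I_(n.+2) -> R)
  (T : {set {set 'I_(n.+2)}}) (v w : 'I_(n.+2)) :
  (2 <= n)%N ->
  strictly_increasing t ->
  triangulation t T ->
  (v < w)%N ->
  F1T T [set v; w] ->
  ~ F1C [set v; w] ->
  exists a b c : 'I_(n.+2),
    [/\ (a < v)%N, (v < b)%N, (b < w)%N & (w < c)%N] /\
    [/\ F2T T [set v; w; a], F2T T [set v; w; b] & F2T T [set v; w; c]].
Proof.
move=> n2 tinc HT vw [_ [s0 s0T sub]] nC.
have tle : forall i j : 'I_(n.+2), (i <= j)%N -> t i <= t j.
  move=> i j; rewrite leq_eqVlt => /orP[/eqP/val_inj -> // | /tinc/ltW //].
have tlt : forall i j : 'I_(n.+2), t i < t j -> (i < j)%N.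
  by move=> i j h; rewrite ltnNge; apply/negP => /tle; rewrite leNgt h.
have tinj : injective t.
  move=> i j e; apply/val_inj/eqP; rewrite eqn_leq.
  by apply/andP; split; rewrite leqNgt; apply/negP => /tinc; rewrite e ltxx.
have vs0 : v \in s0 by apply: (subsetP sub); rewrite !inE eqxx.
have ws0 : w \in s0 by apply: (subsetP sub); rewrite !inE eqxx orbT.
have vnw : v != w by rewrite neq_ltn vw.
have wlt : (w < n.+2)%N := ltn_ord w.
have v0 : (0 < v)%N.
  rewrite lt0n; apply/negP => /eqP v0; apply: nC; exists v, w; split => //.
  case: (w =P n.+1 :> nat) => wn; first by apply: Or41.
  apply: Or42; split => //; apply/andP; split; first by rewrite -v0.
  by rewrite ltn_neqAle -ltnS wlt andbT; apply/eqP.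
have wn : (w < n.+1)%N.
  rewrite ltn_neqAle -ltnS wlt andbT; apply/eqP => wn; apply: nC; exists v, w.
  split => //; apply: Or43; split => //; apply/andP; split => //.
  by move: vw; rewrite wn.
have vw1 : (v.+1 < w)%N.
  rewrite ltn_neqAle vw andbT; apply/eqP => wv; apply: nC; exists v, w.
  split => //; apply: Or44; split => //; apply/andP; split => //.
  by apply: leq_trans vw _; rewrite -ltnS.
pose PA := ('X - (t v)%:P) * ('X - (t w)%:P) * ('X - (t w)%:P).
have PAv : PA.[t v] = 0 by rewrite !hornerE subrr !mul0r.
have PAw : PA.[t w] = 0 by rewrite !hornerE subrr !mulr0.
have PAz : PA.[t ord0] < 0.
  have := tinc ord0 v v0; have := tinc v w vw; rewrite !hornerE => h1 h2.
  have ha : t ord0 - t v < 0 by lra.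
  have hb : t ord0 - t w < 0 by lra.
  by rewrite -mulrA nmulr_rlt0 // nmulr_rgt0.
have [sa [a [saT vsa wsa asa Pa]]] :=
  main tinj HT s0T vs0 ws0 vnw (size3 _ _ _) PAv PAw PAz.
have vS : (v.+1 < n.+2)%N by apply: leq_trans vw1 _; apply: ltnW.
pose PB := ('X - (t v)%:P) * ('X - (t w)%:P).
have PBv : PB.[t v] = 0 by rewrite !hornerE subrr !mul0r.
have PBw : PB.[t w] = 0 by rewrite !hornerE subrr !mulr0.
have PBz : PB.[t (inord v.+1)] < 0.
  have h1 : t v < t (inord v.+1) by apply: tinc; rewrite inordK.
  have h2 : t (inord v.+1) < t w by apply: tinc; rewrite inordK.
  have ha : 0 < t (inord v.+1) - t v by lra.
  by rewrite !hornerE pmulr_rlt0 //; lra.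
have [sb [b [sbT vsb wsb bsb Pb]]] :=
  main tinj HT s0T vs0 ws0 vnw (size2 _ _) PBv PBw PBz.
pose PC := - (('X - (t v)%:P) * ('X - (t v)%:P) * ('X - (t w)%:P)).
have PCs : (size PC <= 4)%N by rewrite size_polyN size3.
have PCv : PC.[t v] = 0 by rewrite !hornerE subrr !mul0r oppr0.
have PCw : PC.[t w] = 0 by rewrite !hornerE subrr !mulr0 oppr0.
have PCz : PC.[t ord_max] < 0.
  have := tinc w ord_max wn; have := tinc v w vw; rewrite !hornerE => h1 h2.
  have ha : 0 < t ord_max - t v by lra.
  have hb : 0 < t ord_max - t w by lra.
  by rewrite oppr_lt0 !mulr_gt0.
have [sc [c [scT vsc wsc csc Pc]]] :=
  main tinj HT s0T vs0 ws0 vnw PCs PCv PCw PCz.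
move: Pa Pb Pc; rewrite !hornerE => Pa Pb Pc.
have tvw := tinc v w vw.
have av : (a < v)%N.
  apply: tlt; rewrite ltNge; apply/negP => h.
  have : 0 <= (t a - t v) * (t a - t w) * (t a - t w).
    rewrite -mulrA; apply: mulr_ge0; first lra.
    by rewrite -expr2 sqr_ge0.
  by rewrite leNgt Pa.
have vb : (v < b)%N.
  apply: tlt; rewrite ltNge; apply/negP => h.
  have : 0 <= (t b - t v) * (t b - t w) by apply: mulr_le0; lra.
  by rewrite leNgt Pb.
have bw : (b < w)%N.
  apply: tlt; rewrite ltNge; apply/negP => h.
  have : 0 <= (t b - t v) * (t b - t w) by apply: mulr_ge0; lra.
  by rewrite leNgt Pb.
have wc : (w < c)%N.
  apply: tlt; rewrite ltNge; apply/negP => h.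
  have : (t c - t v) * (t c - t v) * (t c - t w) <= 0.
    apply: mulr_ge0_le0; last lra.
    by rewrite -expr2 sqr_ge0.
  by rewrite -oppr_ge0 leNgt Pc.
exists a, b, c; split; first by split.
have ne : forall i j : 'I_(n.+2), (i < j)%N -> i != j.
  by move=> i j h; apply/eqP => e; move: h; rewrite e ltnn.
split.
- apply: (F2T_of saT vsa wsa asa vnw); rewrite eq_sym; apply: ne => //.
  exact: ltn_trans av vw.
- by apply: (F2T_of sbT vsb wsb bsb vnw); [apply: ne | rewrite eq_sym; apply: ne].
- apply: (F2T_of scT vsc wsc csc vnw); apply: ne => //.
  exact: ltn_trans vw wc.
Qed.
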